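(* For every $n\in\mathbb{N}$, \[ \frac{2n+1}{n+1}\,{}_3F_2\!\left(1,1,2n+2;\,2,n+2;\,\tfrac12\right)=H_n+2\log 2. \]
   Context: Pochhammer symbol: $(\alpha)_0=1$, $(\alpha)_k=\alpha(\alpha+1)\cdots(\alpha+k-1)$. ${}_3F_2(a,b,c;d,e;z)=\sum_{k\ge0}\frac{(a)_k(b)_k(c)_k}{(d)_k(e)_k}\frac{z^k}{k!}$. $H_n=\sum_{k=1}^{n}\frac1k$ ($H_0=0$). *)

(* Defs.v *)
From Stdlib Require Import Reals Arith.
Open Scope R_scope.

Fixpoint poch (a : R) (k : nat) : R :=
  match k with
  | O => 1
  | S k' => poch a k' * (a + INR k')
  end.

Definition F32_term (a b c d e z : R) (k : nat) : R :=
  (poch a k * poch b k * poch c k) / (poch d k * poch e k) * (z ^ k / INR (Factorial.fact k)).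

Definition F32_is (a b c d e z L : R) : Prop :=
  infinite_sum (F32_term a b c d e z) L.

Fixpoint harmonic (n : nat) : R :=
  match n with
  | O => 0
  | S n' => harmonic n' + / INR (S n')
  end.

(* Main.v *)
Require Import Defs.
From Stdlib Require Import Reals Lra Lia.
From Coquelicot Require Import Coquelicot.
Open Scope R_scope.

Lemma poch_pos a k : 0 < a -> 0 < poch a k.
Proof. intros Ha; induction k; simpl. lra. pose proof (pos_INR k). apply Rmult_lt_0_compat; lra. Qed.

Lemma poch1 k : poch 1 k = INR (Factorial.fact k).
Proof. induction k; simpl poch. simpl; lra. rewrite IHk. change (Factorial.fact (S k)) with (S k * Factorial.fact k)%nat.
 rewrite mult_INR, S_INR. ring. Qed.

Lemma poch2 k : poch 2 k = INR (Factorial.fact (S k)).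
Proof. induction k; simpl poch. simpl; lra. rewrite IHk. change (Factorial.fact (S (S k))) with (S (S k) * Factorial.fact (S k))%nat.
 rewrite mult_INR, !S_INR. ring. Qed.

Definition p (n k : nat) : R := poch (2*INR n+2) k / poch (INR n+2) k * (1/2)^k.

Ltac pos n k := pose proof (pos_INR n); pose proof (pos_INR k).

Lemma F32_p n k : F32_term 1 1 (2 * INR n + 2) 2 (INR n + 2) (1/2) k = p n k / (INR k + 1).
Proof.
 unfold F32_term, p. rewrite poch1, poch2. change (Factorial.fact (S k)) with (S k * Factorial.fact k)%nat.
 rewrite mult_INR, S_INR. pose proof (INR_fact_neq_0 k). pos n k.
 assert (0 < poch (INR n + 2) k) by (apply poch_pos; lra).
 field. repeat split; lra.
Qed.

Lemma p_Sk n k : p n (S k) = p n k * ((2*INR n+2+INR k)/(INR n+2+INR k)/2).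
Proof. unfold p; simpl poch. pos n k.
 assert (0 < poch (INR n + 2) k) by (apply poch_pos; lra).
 simpl pow. field. lra. Qed.

Lemma p_0 n : p n 0 = 1.
Proof. unfold p; simpl. field. Qed.

Lemma p_Sn n k : p (S n) k = p n k * ((2*INR n+INR k+3)*(2*INR n+INR k+2)*(INR n+2)/((2*INR n+2)*(2*INR n+3)*(INR n+INR k+2))).
Proof. induction k.
 - rewrite !p_0. simpl. pos n 0%nat. field. lra.
 - rewrite p_Sk, IHk, p_Sk, S_INR, S_INR. pos n k. field. lra.
Qed.

Lemma p_pos n k : 0 < p n k.
Proof. unfold p. pos n k. apply Rmult_lt_0_compat. apply Rdiv_lt_0_compat; apply poch_pos; lra.
 apply pow_lt; lra. Qed.

Definition b (n k : nat) : R := (2*INR n+1)/(INR n+1) * (p n k / (INR k + 1)).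

Lemma b_tele n k : b (S n) k - b n k = p n k/(INR n+1) - p n (S k)/(INR n+1).
Proof. unfold b. rewrite p_Sn, p_Sk, S_INR. pos n k. field. lra. Qed.

Lemma sum_b n N : sum_f_R0 (b (S n)) N = sum_f_R0 (b n) N + (1 - p n (S N))/(INR n+1).
Proof. induction N; simpl sum_f_R0.
 - pose proof (b_tele n 0). rewrite p_0 in H. pos n 0%nat. apply (Rplus_eq_reg_r (- b n 0)). field_simplify; [|lra]. 
   rewrite H. field. lra.
 - rewrite IHN. pose proof (b_tele n (S N)). pos n 0%nat. lra.
Qed.

Lemma p_ratio n k : (n <= k)%nat -> p n (S k) <= 3/4 * p n k.
Proof. intros H. rewrite p_Sk. pose proof (p_pos n k). apply le_INR in H.
 pose proof (pos_INR n).
 rewrite (Rmult_comm (3/4)). apply Rmult_le_compat_l; [lra|].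
 apply Rmult_le_reg_r with (2*(INR n+2+INR k)); [lra|].
 replace ((2 * INR n + 2 + INR k) / (INR n + 2 + INR k) / 2 * (2 * (INR n + 2 + INR k))) with (2 * INR n + 2 + INR k) by (field; lra).
 lra. Qed.

Lemma p_geom n j : p n (n+j) <= (3/4)^j * p n n.
Proof. induction j. rewrite Nat.add_0_r; simpl; lra.
 rewrite Nat.add_succ_r. eapply Rle_trans. apply p_ratio; lia.
 simpl pow. pose proof (p_pos n (n+j)). lra. Qed.

Lemma p_lim n : Un_cv (p n) 0.
Proof. intros eps Heps. pose proof (p_pos n n).
 destruct (pow_lt_1_zero (3/4)) with (y := eps / p n n) as [N0 HN0].
 rewrite Rabs_right; lra. apply Rdiv_lt_0_compat; lra.
 exists (n + N0)%nat. intros m Hm. replace m with (n + (m - n))%nat by lia.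
 unfold R_dist. rewrite Rminus_0_r, Rabs_right by (left; apply p_pos).
 specialize (HN0 (m - n)%nat ltac:(lia)). rewrite Rabs_right in HN0 by (left; apply pow_lt; lra).
 eapply Rle_lt_trans. apply p_geom.
 apply Rmult_lt_compat_r with (r := p n n) in HN0; [|lra].
 replace (eps / p n n * p n n) with eps in HN0 by (field; lra). lra. Qed.

Definition SL (N : nat) (x : R) := sum_f_R0 (fun k => x^(S k)/INR (S k)) N.

Lemma SL_der N c : is_derive (SL N) c (sum_f_R0 (fun k => c^k) N).
Proof. induction N.
 - unfold SL; simpl. auto_derive; auto. field.
 - unfold SL; simpl sum_f_R0. apply (is_derive_plus (fun x => sum_f_R0 (fun k : nat => x ^ S k / INR (S k)) N) (fun x => x ^ S (S N) / INR (S (S N)))). exact IHN.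
   assert (INR (S (S N)) <> 0) by (apply not_0_INR; lia).
   auto_derive; auto. change (match N with | 0%nat => 1 | S _ => INR N + 1 end + 1) with (INR (S (S N))).
   field; auto.
Qed.

Lemma SL_0 N : SL N 0 = 0.
Proof. induction N; unfold SL in *. simpl; field. rewrite tech5, IHN. simpl pow. rewrite Rmult_0_l. unfold Rdiv. ring. Qed.

Lemma ln_bound N : 0 <= ln 2 - SL N (1/2) <= (1/2)^(S N).
Proof.
 set (f := fun x => - ln (1 - x) - SL N x).
 destruct (MVT_cor2 f (fun c => c^(S N)/(1-c)) 0 (1/2)) as [c [Hc1 Hc2]]. lra.
 { intros c Hc. apply is_derive_Reals.
   assert (H1 : is_derive (fun x => - ln (1-x)) c (/(1-c))).
   { auto_derive. lra. field. lra. }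
   pose proof (is_derive_minus _ _ c _ _ H1 (SL_der N c)) as H2.
   rewrite tech3 in H2 by lra.
   replace (c ^ S N / (1 - c)) with (/ (1 - c) - (1 - c ^ S N) / (1 - c)) by (field; lra).
   exact H2. }
 unfold f in Hc1. rewrite SL_0 in Hc1. replace (1 - 0) with 1 in Hc1 by ring. rewrite ln_1 in Hc1.
 replace (1 - 1/2) with (/2) in Hc1 by field. rewrite ln_Rinv in Hc1 by lra.
 assert (0 <= c ^ S N) by (apply pow_le; lra).
 assert (c ^ S N <= (1/2)^S N) by (apply pow_incr; lra).
 assert (0 <= c ^ S N / (1 - c) * (1/2 - 0)) by (apply Rmult_le_pos; [apply Rdiv_le_0_compat|]; lra).
 assert (c ^ S N / (1 - c) * (1/2 - 0) <= (1/2)^S N).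
 { apply Rmult_le_reg_r with (2*(1-c)). lra.
   replace (c ^ S N / (1 - c) * (1/2 - 0) * (2 * (1 - c))) with (c ^ S N) by (field; lra).
   assert (0 <= (1/2)^S N) by (apply pow_le; lra). nra. }
 lra.
Qed.

Lemma SL_lim : Un_cv (fun N => SL N (1/2)) (ln 2).
Proof. intros eps Heps.
 destruct (pow_lt_1_zero (1/2)) with (y := eps) as [N0 HN0]. rewrite Rabs_right; lra. lra.
 exists N0. intros m Hm. specialize (HN0 (S m) ltac:(lia)). pose proof (ln_bound m).
 rewrite Rabs_right in HN0 by (left; apply pow_lt; lra).
 unfold R_dist. rewrite Rabs_left1 by lra. lra. Qed.

Lemma Un_cv_ext u v l : (forall N, u N = v N) -> Un_cv u l -> Un_cv v l.
Proof. intros E H eps He. destruct (H eps He) as [N HN]. exists N. intros m Hm. rewrite <- E. auto. Qed.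

Lemma const_cv c : Un_cv (fun _ => c) c.
Proof. intros eps He. exists 0%nat. intros. unfold R_dist. rewrite Rminus_diag, Rabs_R0. lra. Qed.

Lemma b_cv n : Un_cv (fun N => sum_f_R0 (b n) N) (harmonic n + 2 * ln 2).
Proof. induction n.
 - simpl harmonic. rewrite Rplus_0_l.
   apply Un_cv_ext with (fun N => 2 * SL N (1/2)).
   + intros N. unfold SL. rewrite scal_sum. apply sum_eq. intros k _.
     unfold b, p. rewrite (S_INR k). change (INR 0) with 0. replace (2 * 0 + 2) with (0+2) by ring.
     assert (0 < poch (0+2) k) by (apply poch_pos; lra).
     pose proof (pos_INR k). rewrite <- (tech_pow_Rmult (1/2) k). field. lra.
   + apply (CV_mult (fun _ => 2) _ 2 (ln 2)). apply const_cv. apply SL_lim.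
 - apply Un_cv_ext with (fun N => sum_f_R0 (b n) N + (1 - p n (S N)) * / (INR n + 1)).
   + intros N. rewrite sum_b. unfold Rdiv. reflexivity.
   + change (harmonic (S n)) with (harmonic n + / INR (S n)). replace (harmonic n + / INR (S n) + 2 * ln 2) with
       ((harmonic n + 2 * ln 2) + (1 - 0) * / (INR n + 1)) by (rewrite S_INR; ring).
     apply (CV_plus (fun N => sum_f_R0 (b n) N) (fun N => (1 - p n (S N)) * / (INR n + 1))). exact IHn. apply (CV_mult (fun N => 1 - p n (S N)) (fun _ => / (INR n + 1))).
     2: apply const_cv.
     apply (CV_minus (fun _ => 1) (fun N => p n (S N))). apply const_cv.
     intros eps He. destruct (p_lim n eps He) as [N HN]. exists N. intros m Hm. apply HN. lia.
Qed.

Theorem mainTheorem14 (n : nat) :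
  exists L : R,
    F32_is 1 1 (2 * INR n + 2) 2 (INR n + 2) (1/2) L /\
    (2 * INR n + 1) / (INR n + 1) * L = harmonic n + 2 * ln 2.
Proof.
  pose proof (pos_INR n).
  exists ((INR n + 1)/(2 * INR n + 1) * (harmonic n + 2 * ln 2)). split.
  - unfold F32_is. 
    assert (H2 : Un_cv (fun N => sum_f_R0 (F32_term 1 1 (2 * INR n + 2) 2 (INR n + 2) (1/2)) N)
       ((INR n + 1)/(2 * INR n + 1) * (harmonic n + 2 * ln 2))).
    { apply Un_cv_ext with (fun N => (INR n + 1)/(2 * INR n + 1) * sum_f_R0 (b n) N).
      + intros N. rewrite scal_sum. apply sum_eq. intros k _. rewrite F32_p. unfold b. field.
        pose proof (pos_INR k). lra.
      + apply (CV_mult (fun _ => _)). apply const_cv. apply b_cv. }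
    exact H2.
  - field. lra.
Qed.
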